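(* Let $q$ be an odd prime power, $c\in\mathbb{F}_q^*$, $f(X)=X(X^{q-1}-c)^{q+1}$ on $\mathbb{F}_{q^2}$, with $a,\beta,g$ as in the context. For $L_{[u:v]}\in\mathbb{P}^1$ we have $g(u,v)=0$ if and only if ($c=1$ and $v=0$) or ($c=-1$ and $u=0$). Moreover, for each $L_{[u:v]}\in\mathbb{P}^1$ with $g(u,v)\neq0$, the set $L_{[u:v]}\setminus\{0\}$ is the union of exactly $\frac{q-1}{d}$ cycles of length $d$ in $\mathcal{G}(f)$, where $d$ is the multiplicative order of $g(u,v)$ in $\mathbb{F}_q^*$.
   Context: $a\in\mathbb{F}_q^*$ is a non-square in $\mathbb{F}_q$, $\beta\in\mathbb{F}_{q^2}$ with $\beta^2=a$; every element of $\mathbb{F}_{q^2}$ is uniquely $x+y\beta$, $x,y\in\mathbb{F}_q$. For $(x,y)\neq(0,0)$, $g(x,y)=\frac{(1-c)^2x^2-(1+c)^2y^2a}{x^2-y^2a}\in\mathbb{F}_q$; it satisfies $g(\lambda x,\lambda y)=g(x,y)$ for $\lambda\in\mathbb{F}_q^*$. For $(u,v)\in\mathbb{F}_q^2\setminus\{(0,0)\}$, $L_{[u:v]}=\{\lambda(u+v\beta):\lambda\in\mathbb{F}_q\}$, and $\mathbb{P}^1$ is the set of these $q+1$ lines ($L_{[u:v]}=L_{[u':v']}$ iff $(u',v')$ is a nonzero scalar multiple of $(u,v)$). $\mathcal{G}(f)$ is the functional graph (vertices $\mathbb{F}_{q^2}$, edges $\langle x,f(x)\rangle$); a cycle of length $n$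 consists of distinct $\alpha,f(\alpha),\dots,f^{(n-1)}(\alpha)$ with $f^{(n)}(\alpha)=\alpha$. *)

(* Defs.v *)
From HB Require Import structures.
From mathcomp Require Import all_boot all_order all_algebra all_field.
Set Implicit Arguments. Unset Strict Implicit. Unset Printing Implicit Defensive.
Import GRing.Theory.
Local Open Scope ring_scope.

(* F plays F_q, K plays F_{q^2}, iota : F -> K the embedding of F_q in F_{q^2}. *)

Definition fmap (F K : finFieldType) (iota : {rmorphism F -> K}) (q : nat)
  (c : F) (x : K) : K :=
  x * (x ^+ (q.-1) - iota c) ^+ q.+1.

Definition gfun (F : finFieldType) (c a x y : F) : F :=
  ((1 - c) ^+ 2 * x ^+ 2 - (1 + c) ^+ 2 * y ^+ 2 * a) / (x ^+ 2 - y ^+ 2 * a).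

Definition line_star (F K : finFieldType) (iota : {rmorphism F -> K}) (beta : K)
  (u v : F) : {set K} :=
  [set iota l * (iota u + iota v * beta) | l : F] :\ 0.

Definition is_mult_order (F : finFieldType) (x : F) (d : nat) : Prop :=
  [/\ (0 < d)%N, x ^+ d = 1 & forall k : nat, (0 < k < d)%N -> x ^+ k != 1].

Definition is_cycle (T : finType) (f : T -> T) (n : nat) (S : {set T}) : Prop :=
  exists alpha : T, [/\ (0 < n)%N, S = [set iter k f alpha | k : 'I_n],
                        #|S| = n & iter n f alpha = alpha].

(* Main.v *)
Require Import Defs.
From HB Require Import structures.
From mathcomp Require Import all_boot all_order all_algebra all_field.
From mathcomp Require Import ring pgroup.
Import GRing.Theory.
Set Implicit Arguments. Unset Strict Implicit.
Local Open Scope ring_scope.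

Section Orb.
Variables (T : finType) (f : T -> T) (A : {set T}) (d : nat).
Hypotheses (d0 : (0 < d)%N) (fA : forall z, z \in A -> f z \in A)
  (fd : forall z, z \in A -> iter d f z = z)
  (fk : forall z k, z \in A -> (0 < k < d)%N -> iter k f z != z).

Let S z := [set iter k f z | k : 'I_d].

Lemma iterA z k : z \in A -> iter k f z \in A.
Proof. by move=> zA; elim: k => //= k IH; apply: fA. Qed.

Lemma iter_md z m : z \in A -> iter (m * d) f z = z.
Proof.
move=> zA; elim: m => [|m IH] //=; by rewrite mulSn iterD IH fd.
Qed.

Lemma iter_mod z k : z \in A -> iter k f z = iter (k %% d) f z.
Proof. by move=> zA; rewrite {1}(divn_eq k d) addnC iterD iter_md. Qed.

Lemma memS z k : z \in A -> iter k f z \in S z.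
Proof.
move=> zA; rewrite (@iter_mod z k zA); apply/imsetP.
by exists (Ordinal (ltn_pmod k d0)).
Qed.

Lemma SA z : z \in A -> S z \subset A.
Proof. by move=> zA; apply/subsetP=> x /imsetP [k _ ->]; apply: iterA. Qed.

Lemma zS z : z \in A -> z \in S z.
Proof. by move=> zA; have := @memS z 0 zA. Qed.

Lemma cardS z : z \in A -> #|S z| = d.
Proof.
move=> zA; rewrite card_imset ?card_ord //.
have key: forall i j : 'I_d, (i < j)%N -> iter i f z != iter j f z.
  move=> i j ij; rewrite -(subnK (ltnW ij)) iterD eq_sym.
  apply: fk; first by apply: iterA.
  by rewrite subn_gt0 ij /= (leq_ltn_trans (leq_subr _ _)).
move=> i j eij; apply/val_inj/eqP; rewrite /=.
case: (ltngtP i j) => // ij; first by move: (key _ _ ij); rewrite eij eqxx.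
by move: (key _ _ ij); rewrite eij eqxx.
Qed.

Lemma S_eq z x : z \in A -> x \in S z -> S x = S z.
Proof.
move=> zA /imsetP [i _ ->]; apply/setP=> y; apply/imsetP/imsetP.
  move=> [k _ ->]; rewrite -iterD; have := @memS z (k + i) zA.
  by move/imsetP=> [j _ ->]; exists j.
move=> [k _ ->].
have xA := @iterA z i zA.
have : iter (k + (i * d - i)) f (iter i f z) \in S (iter i f z) by apply: memS.
rewrite -iterD -addnA subnK ?leq_pmulr // iterD iter_md //.
by move/imsetP=> [j _ ->]; exists j.
Qed.

Lemma orbit_part :
  exists C : {set {set T}},
   [/\ forall X, X \in C -> is_cycle f d X, trivIset C, cover C = A
     & #|A| = (#|C| * d)%N].
Proof.
pose C := [set S z | z in A].
have trC : trivIset C.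
  apply/trivIsetP=> X Y /imsetP [z zA ->] /imsetP [z' zA' ->] neq.
  apply/pred0P=> x /=; apply/negbTE/negP=> /andP [x1 x2].
  by move: neq; rewrite -(@S_eq z x zA x1) -(@S_eq z' x zA' x2) eqxx.
have cvC : cover C = A.
  apply/setP=> x; apply/bigcupP/idP.
    by move=> [X /imsetP [z zA ->] xX]; apply: (subsetP (@SA z zA)).
  by move=> xA; exists (S x); [apply: imset_f | apply: zS].
exists C; split=> //.
  move=> X /imsetP [z zA ->]; exists z; split=> //; [exact: cardS | exact: fd].
apply: (card_uniform_partition (n:=d)).
  by move=> X /imsetP [z zA ->]; apply: cardS.
apply/and3P; split; [by apply/eqP | by [] |].
apply/imsetP=> [[z zA] /setP/(_ z)]; rewrite inE zS //.
Qed.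
End Orb.

Lemma frobD (F K : finFieldType) (iota : {rmorphism F -> K}) (x y : K) :
  (x + y) ^+ #|F| = x ^+ #|F| + y ^+ #|F|.
Proof.
apply: exprDn_pchar.
have [p pp pF] := finPcharP F.
have pK : p \in [pchar K] by rewrite (rmorph_pchar iota).
rewrite (eq_pnat _ (pcharf_eq pK)).
have := pprimeChar_pgroup pF.
by rewrite /pgroup cardsT.
Qed.

Section Alg.
Variables (F K : finFieldType) (iota : {rmorphism F -> K}) (q : nat) (c a : F) (beta : K).
Hypotheses (hq : #|F| = q) (hodd : odd q) (hc : c != 0)
  (ha : forall b : F, b ^+ 2 != a) (hb : beta ^+ 2 = iota a).

Lemma q_gt1 : (1 < q)%N.
Proof. by rewrite -hq finNzRing_gt1. Qed.

Lemma expF (x : F) : x ^+ q = x.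
Proof. by rewrite -hq expf_card. Qed.

Lemma iotaq (x : F) : iota x ^+ q = iota x.
Proof. by rewrite -rmorphXn expF. Qed.

Lemma frobK (x y : K) : (x + y) ^+ q = x ^+ q + y ^+ q.
Proof. by rewrite -hq (frobD iota). Qed.

Lemma not_iota (x : F) : iota x != beta.
Proof.
apply/eqP=> e; have := ha x; rewrite -(inj_eq (fmorph_inj iota)) rmorphXn e hb.
by rewrite eqxx.
Qed.

Lemma betaq : beta ^+ q = - beta.
Proof.
have e2 : (beta ^+ q) ^+ 2 = beta ^+ 2 by rewrite exprAC hb iotaq.
have : (beta ^+ q - beta) * (beta ^+ q + beta) == 0.
  by rewrite -subr_sqr e2 subrr.
rewrite mulf_eq0 => /orP [/eqP e | ]; last by rewrite addr_eq0 => /eqP.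
exfalso; move/eqP: e; rewrite subr_eq0 => /eqP e.
pose P : {poly K} := 'X^q - 'X.
have szP : size P = q.+1.
  rewrite /P size_polyDl ?size_polyXn // size_polyN size_polyX ltnS.
  exact: q_gt1.
pose rs := beta :: map iota (enum F).
have := @max_poly_roots _ P rs.
rewrite /= size_map -cardE hq szP ltnn.
have P0 : P != 0 by rewrite -size_poly_eq0 szP.
move=> /(_ P0) H; suff: false by []; apply: H.
  rewrite /= /root /P !hornerE e subrr eqxx /=.
  apply/allP=> y /mapP [x _ ->]; by rewrite /root !hornerE iotaq subrr.
rewrite /= map_inj_uniq ?enum_uniq ?andbT; last exact: fmorph_inj.
by apply/mapP=> [[x _ /eqP]]; rewrite eq_sym (negbTE (not_iota x)).
Qed.

Lemma wq (u v : F) : (iota u + iota v * beta) ^+ q = iota u + iota (- v) * beta.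
Proof. by rewrite frobK exprMn !iotaq betaq rmorphN mulrN mulNr. Qed.

Lemma w_neq0 (u v : F) : (u, v) != (0, 0) -> iota u + iota v * beta != 0.
Proof.
move=> nz; have [v0|v0] := eqVneq v 0.
  move: nz; rewrite v0 rmorph0 mul0r addr0 fmorph_eq0 => nz.
  by apply: contra nz => /eqP ->.
apply/eqP => e; have : iota (- u / v) == beta.
  rewrite fmorph_div rmorphN; apply/eqP.
  have iv : iota v != 0 by rewrite fmorph_eq0.
  move/eqP: e; rewrite addrC addr_eq0 => /eqP <-.
  by rewrite mulrAC divff // mul1r.
by rewrite (negbTE (not_iota _)).
Qed.


Lemma key (u v : F) : (u, v) != (0, 0) ->
  ((iota u + iota v * beta) ^+ q.-1 - iota c) ^+ q.+1 = iota (gfun c a u v).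
Proof.
move=> nz.
have nz' : (u, - v) != (0, 0).
  by apply: contra nz; rewrite !xpair_eqE oppr_eq0.
have w0 := w_neq0 nz; have wb0 := w_neq0 nz'.
set w := iota u + iota v * beta in w0 *.
set wb := iota u + iota (- v) * beta in wb0 *.
have hw : w ^+ q.-1 = wb / w.
  apply: (mulIf w0); rewrite mulfVK // -exprSr prednK ?wq //.
  by apply: ltnW; apply: q_gt1.
have hwb : wb ^+ q = w by rewrite /wb wq opprK.
rewrite hw exprSr -rmorphN frobK exprMn exprVn hwb wq -/wb iotaq rmorphN.
have D0 : iota u ^+ 2 - iota v ^+ 2 * beta ^+ 2 != 0.
  have -> : iota u ^+ 2 - iota v ^+ 2 * beta ^+ 2 = w * wb.
    by rewrite /w /wb rmorphN; ring.
  by rewrite mulf_neq0.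
move: w0 wb0; rewrite /gfun fmorph_div /w /wb ?rmorphN ?rmorphB ?rmorphM ?rmorphXn
  ?rmorphB ?rmorphD ?rmorph1 ?rmorphN ?rmorphM ?rmorphXn -hb => w0 wb0.
field.
by rewrite D0 w0 wb0.
Qed.


Lemma fmap_line (u v l : F) : (u, v) != (0, 0) ->
  fmap iota q c (iota l * (iota u + iota v * beta))
  = iota (l * gfun c a u v) * (iota u + iota v * beta).
Proof.
move=> nz; rewrite /fmap.
have [->|l0] := eqVneq l 0; first by rewrite !(rmorph0, mul0r).
have lq : l ^+ q.-1 = 1.
  apply: (mulIf l0); rewrite mul1r -exprSr prednK ?expF //.
  by apply: ltnW; apply: q_gt1.
by rewrite exprMn -rmorphXn lq rmorph1 mul1r key // rmorphM; ring.
Qed.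

Lemma iter_line (u v l : F) k : (u, v) != (0, 0) ->
  iter k (fmap iota q c) (iota l * (iota u + iota v * beta))
  = iota (l * gfun c a u v ^+ k) * (iota u + iota v * beta).
Proof.
move=> nz; elim: k => [|k IH] /=; first by rewrite expr0 mulr1.
by rewrite IH fmap_line // exprSr mulrA.
Qed.

Lemma two_neq0 : (2 : F) != 0.
Proof.
apply/negP=> /eqP t0.
have [p pp pF] := finPcharP F.
have pq : p.-nat q.
  by have := pprimeChar_pgroup pF; rewrite /pgroup cardsT hq.
have p2 : (2 \in [pchar F])%N by apply/andP; split => //; rewrite t0.
have e2 := pcharf_eq pF 2; rewrite p2 in e2.
have := @pnatPpi _ _ (pdiv q) pq; rewrite pi_pdiv q_gt1 => /(_ isT).
move=> /eqP pd; have pd2 : pdiv q = 2%N.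
  by rewrite pd; apply/esym/eqP; rewrite -[_ == _]/(2 \in (p : nat_pred)) -e2.
have := pdiv_dvd q; rewrite pd2 dvdn2 hodd //.
Qed.

Lemma part1 (u v : F) : (u, v) != (0, 0) ->
  (gfun c a u v = 0 <-> (c = 1 /\ v = 0) \/ (c = -1 /\ u = 0)).
Proof.
move=> nz.
have D0 : u ^+ 2 - v ^+ 2 * a != 0.
  have [v0|v0] := eqVneq v 0.
    move: nz; rewrite v0 expr0n /= mul0r subr0 expf_eq0 /= => nz.
    by apply: contra nz => /eqP ->; rewrite !xpair_eqE eqxx.
  rewrite subr_eq0; apply/eqP=> e; have := ha (u / v).
  by rewrite expr_div_n e mulrAC divff ?mul1r ?eqxx // expf_neq0.
rewrite /gfun; split.
  move/eqP; rewrite mulf_eq0 invr_eq0 (negbTE D0) orbF subr_eq0 => /eqP e.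
  have [v0|v0] := eqVneq v 0.
    left; split => //; move: e; rewrite v0 expr0n /= !(mul0r, mulr0).
    move/eqP; rewrite mulf_eq0 expf_eq0 /= subr_eq0 => /orP [/eqP -> //|].
    move: nz; rewrite v0 expf_eq0 /= => nz /eqP u0; move: nz; rewrite u0 eqxx //.
  have [c1|c1] := eqVneq (1 + c) 0.
    right; have cm : c = -1 by apply/eqP; rewrite -addr_eq0 addrC c1.
    split => //; move: e; rewrite c1 expr0n /= !mul0r cm opprK.
    move/eqP; rewrite mulf_eq0 expf_eq0 /= (negbTE two_neq0) /= expf_eq0 /=.
    by move/eqP.
  exfalso; have := ha ((1 - c) * u / ((1 + c) * v)).
  by rewrite expr_div_n !exprMn e mulrAC divff ?mul1r ?eqxx // mulf_neq0 ?expf_neq0.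
case=> [[-> ->]|[-> ->]].
  by ring.
by ring.
Qed.

End Alg.

Theorem mainTheorem5 (F K : finFieldType) (iota : {rmorphism F -> K})
  (q : nat) (c a : F) (beta : K) :
  #|F| = q -> odd q -> #|K| = (q ^ 2)%N ->
  c != 0 ->
  (forall b : F, b ^+ 2 != a) ->
  beta ^+ 2 = iota a ->
  (forall u v : F, (u, v) != (0, 0) ->
     (gfun c a u v = 0 <-> (c = 1 /\ v = 0) \/ (c = -1 /\ u = 0)))
  /\
  (forall u v : F, (u, v) != (0, 0) -> gfun c a u v != 0 ->
     forall d : nat, is_mult_order (gfun c a u v) d ->
     exists C : {set {set K}},
       [/\ (forall S, S \in C -> is_cycle (fmap iota q c) d S),
           trivIset C,
           cover C = line_star iota beta u v
         & #|C| = ((q - 1) %/ d)%N]).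
Proof.
move=> hq hodd hK hc ha hb; split.
  by move=> u v nz; apply: (part1 c hq hodd ha nz).
move=> u v nz g0 d [d0 gd gk].
have w0 := w_neq0 ha hb nz.
set w := iota u + iota v * beta in w0.
set g := gfun c a u v in g0 gd gk *.
have memL : forall z, z \in line_star iota beta u v <-> exists2 l, l != 0 & z = iota l * w.
  move=> z; rewrite /line_star in_setD1; split.
    move=> /andP [z0 /imsetP [l _ el]]; exists l => //.
    by apply: contra z0 => /eqP l0; rewrite el l0 rmorph0 mul0r.
  move=> [l l0 ->]; rewrite mulf_neq0 ?fmorph_eq0 //=.
  by apply/imsetP; exists l.
have := @orbit_part K (fmap iota q c) (line_star iota beta u v) d d0.
case.
- move=> z /memL [l l0 ->]; apply/memL; exists (l * g); first by rewrite mulf_neq0.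
  exact: fmap_line.
- move=> z /memL [l l0 ->]; by rewrite (iter_line c hq ha hb) // gd mulr1.
- move=> z k /memL [l l0 ->] kd; rewrite (iter_line c hq ha hb) //.
  apply/negP=> /eqP /(mulIf w0) /fmorph_inj e.
  have : g ^+ k = 1 by apply: (mulfI l0); rewrite mulr1.
  by apply/eqP; apply: gk.
move=> C [h1 h2 h3 h4]; exists C; split => //.
have cL : #|line_star iota beta u v| = (q - 1)%N.
  rewrite /line_star.
  have ci : #|[set iota l * (iota u + iota v * beta) | l : F]| = q.
    rewrite card_imset; first exact: hq.
    by move=> x y /(mulIf w0) /fmorph_inj.
  have := cardsD1 0 [set iota l * (iota u + iota v * beta) | l : F].
  have -> : (0 : K) \in [set iota l * (iota u + iota v * beta) | l : F].
    by apply/imsetP; exists 0 => //; rewrite rmorph0 mul0r.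
  by rewrite ci => ->; rewrite add1n subSS subn0.
by rewrite -cL h4 mulnK.
Qed.
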